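(* Let $\mathcal{C}'$ be any function mapping a pair consisting of an $\mathcal{ALC}$-formula and an interpretation to an $\mathcal{ALC}$-formula. Then $\mathcal{C}'(\varphi,M)\equiv \mathcal{C}(\varphi,M)$ for every $\mathcal{ALC}$-formula $\varphi$ and every interpretation $M$ (where $\mathcal{C}$ is the finite base model contraction function defined in the context) if and only if $\mathcal{C}'$ satisfies, for every $\mathcal{ALC}$-formula $\varphi$ and every interpretation $M$, the following postulates: (success) $M\not\models \mathcal{C}'(\varphi,M)$; (inclusion) $\mathrm{Mod}(\mathcal{C}'(\varphi,M))\subseteq \mathrm{Mod}(\varphi)$; (atomic retainment) for every set $\mathbb{M}'$ of interpretations, if $\mathrm{Mod}(\mathcal{C}'(\varphi,M))\subsetneq \mathbb{M}'\subseteq \mathrm{Mod}(\varphi)\setminus [M]_\varphi$, then $\mathbb{M}'$ is not finitely representable in $\mathcal{ALC}$-formula; (atomic extensionality) for every interpretation $M'$, if $M'\equiv_\varphi M$ then $\mathrm{Mod}(\mathcal{C}'(\varphi,M))=\mathrm{Mod}(\mathcal{C}'(\varphi,M'))$.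
   Context: Syntax: $N_C,N_R,N_I$ are pairwise disjoint countably infinite sets of concept, role and individual names. $\mathcal{ALC}$ concepts: $C::=A\mid \neg C\mid (C\sqcap C)\mid \exists r.C$ ($A\in N_C$, $r\in N_R$); $\top$, $\sqcup$ are the usual abbreviations. $\mathcal{ALC}$-formulae: $\phi::=\alpha\mid\neg\phi\mid(\phi\wedge\phi)$, with atomic formulae $\alpha::=C(a)\mid r(a,b)\mid (C=\top)$, $a,b\in N_I$; $\vee$ and $\bot$ are the usual abbreviations and $\neg\neg\psi$ is identified with $\psi$. A literal is an atomic formula or the negation of one. Semantics: an interpretation $I=(\Delta^I,\cdot^I)$ has a countable nonempty domain and maps concept names to subsets, role names to binary relations and individual names to elements; concepts are interpreted as usual ($\top^I=\Delta^I$, $(\neg C)^I=\Delta^I\setminus C^I$, $(C\sqcap D)^I=C^I\cap D^I$, $(\exists r.C)^I=\{d\mid \exists d'\in C^I,(d,d')\in r^I\}$); $I\models C(a)$ iff $a^I\in C^I$, $I\models r(a,b)$ iff $(a^I,b^I)\in r^I$, $I\models (C=\top)$ iff $C^I=\Delta^I$, with $\neg,\wedge$ classical. Models are interpretations; $\mathrm{Mod}(\varphi)$ is the set of interpretations satisfying $\varphi$; $\varphi\equiv\psi$ iff $\mathrm{Mod}(\varphi)=\mathrm{Mod}(\psi)$. A set of interpretations is finitely representable in $\mathcal{ALC}$-formula if it equals $\mathrm{Mod}$ of some finite set of $\mathcal{ALC}$-formulae (equivalently of a single $\mathcal{ALC}$-formula). Subformulae: $\mathrm{Sub}(\alpha)=\mathrm{Sub}(\neg\alpha)=\{\alpha,\neg\alpha\}$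 for atomic $\alpha$; $\mathrm{Sub}(\psi\wedge\psi')=\mathrm{Sub}(\neg(\psi\wedge\psi'))=\{\psi\wedge\psi',\neg(\psi\wedge\psi')\}\cup\mathrm{Sub}(\psi)\cup\mathrm{Sub}(\psi')$. $\mathrm{con}(\varphi)$ is the smallest set of concepts containing $C$ whenever $(C=\top)\in\mathrm{Sub}(\varphi)$ or $C(a)\in\mathrm{Sub}(\varphi)$, containing $C,D$ whenever it contains $C\sqcap D$, containing $C$ whenever it contains $\exists r.C$, and closed under single negation. $\mathrm{ind}(\varphi)$ is the set of individual names in $\varphi$. A concept type for $\varphi$ is $c\subseteq\mathrm{con}(\varphi)$ with: $D\in c$ iff $\neg D\notin c$ for all $D\in\mathrm{con}(\varphi)$, and $D\sqcap E\in c$ iff $\{D,E\}\subseteq c$ for all $D\sqcap E\in\mathrm{con}(\varphi)$. A formula type for $\varphi$ is $f\subseteq\mathrm{Sub}(\varphi)$ with: $\psi\in f$ iff $\neg\psi\notin f$ for all $\psi\in\mathrm{Sub}(\varphi)$, and $\psi\wedge\psi'\in f$ iff $\{\psi,\psi'\}\subseteq f$ for all $\psi\wedge\psi'\in\mathrm{Sub}(\varphi)$. A model candidate for $\varphi$ is $(T,o,f)$ with $T$ a set of concept types, $o:\mathrm{ind}(\varphi)\to T$, $f$ a formula type, such that $\varphi\in f$; $C(a)\in f$ implies $C\in o(a)$; $r(a,b)\in f$ implies $\{\neg C\mid\neg\exists r.C\in o(a)\}\subseteq o(b)$. It is a quasimodel for $\varphi$ if moreover: for every $c\in T$ and $\exists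 r.D\in c$ there is $c'\in T$ with $\{D\}\cup\{\neg E\mid \neg\exists r.E\in c\}\subseteq c'$; for every $c\in T$ and concept $C$, $\neg C\in c$ implies $(C=\top)\notin f$; for every concept $C$, $\neg(C=\top)\in f$ implies some $c\in T$ has $C\notin c$; $T\neq\emptyset$. $\mathrm{ftypes}(\varphi)=\{f\mid (T,o,f)$ a quasimodel for $\varphi\}$. For an interpretation $I$, $\mathrm{qm}(\varphi,I)=(T,o,f)$ where $T=\{c(x)\mid x\in\Delta^I\}$ with $c(x)=\{C\in\mathrm{con}(\varphi)\mid x\in C^I\}$, $o(a)=c(a^I)$, $f=\{\psi\in\mathrm{Sub}(\varphi)\mid I\models\psi\}$. $\mathrm{lit}(f)$ is the set of literals in $f$. $\mathrm{qfilter}(\varphi,M)=\mathrm{ftypes}(\varphi)\setminus\{f\}$ where $\mathrm{qm}(\varphi,M)=(T,o,f)$. The finite base model contraction function is $\mathcal{C}(\varphi,M)=\bigvee_{f\in\mathrm{qfilter}(\varphi,M)}\bigwedge\mathrm{lit}(f)$ if $M\models\varphi$ and $\mathrm{qfilter}(\varphi,M)\neq\emptyset$; $\bot$ if $M\models\varphi$ and $\mathrm{qfilter}(\varphi,M)=\emptyset$; $\varphi$ otherwise. $\mathcal{L}_{lit}(\varphi)$ is the set of Boolean combinations of the atomic formulae occurring in $\varphi$; $M\equiv_\varphi M'$ iff for all $\psi\in\mathcal{L}_{lit}(\varphi)$, $M\models\psi$ iff $M'\models\psi$; $[M]_\varphi=\{M'\mid M'\equiv_\varphi M\}$. *)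

(* Defs.v *)
From Stdlib Require Import List ClassicalEpsilon.
Import ListNotations.

(* Concept, role and individual names: N_C = N_R = N_I = nat (disjoint by typing). *)
Inductive concept : Type :=
| CName : nat -> concept
| CNot  : concept -> concept
| CAnd  : concept -> concept -> concept
| CEx   : nat -> concept -> concept.

Inductive formula : Type :=
| FConc : concept -> nat -> formula
| FRole : nat -> nat -> nat -> formula
| FTop  : concept -> formula
| FNot  : formula -> formula
| FAnd  : formula -> formula -> formula.

Definition is_atomic (phi : formula) : Prop :=
  match phi with FConc _ _ | FRole _ _ _ | FTop _ => True | _ => False end.

Definition is_literal (phi : formula) : bool :=
  match phi with
  | FConc _ _ | FRole _ _ _ | FTop _ => true
  | FNot (FConc _ _) | FNot (FRole _ _ _) | FNot (FTop _) => true
  | _ => false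
  end.

Definition FBot : formula := FAnd (FTop (CName 0)) (FNot (FTop (CName 0))).
Definition FTrue : formula := FNot FBot.
Definition FOr (p q : formula) : formula := FNot (FAnd (FNot p) (FNot q)).
Definition bigAnd (l : list formula) : formula := fold_right FAnd FTrue l.
Definition bigOr (l : list formula) : formula := fold_right FOr FBot l.

(* single negation ("not not psi is identified with psi") *)
Definition fneg (phi : formula) : formula :=
  match phi with FNot psi => psi | _ => FNot phi end.
Definition cneg (C : concept) : concept :=
  match C with CNot D => D | _ => CNot C end.

Fixpoint dn (phi : formula) : formula :=
  match phi with
  | FNot psi => fneg (dn psi)
  | FAnd p q => FAnd (dn p) (dn q)
  | a => a
  end.

Record Interp : Type := {
  dom : Type;
  dom_inh : inhabited dom;
  dom_count : exists g : dom -> nat, forall x y, g x = g y -> x = y;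
  cI : nat -> dom -> Prop;
  rI : nat -> dom -> dom -> Prop;
  iI : nat -> dom
}.

Fixpoint cint (I : Interp) (C : concept) : dom I -> Prop :=
  match C with
  | CName A => cI I A
  | CNot D => fun x => ~ cint I D x
  | CAnd D E => fun x => cint I D x /\ cint I E x
  | CEx r D => fun x => exists y, rI I r x y /\ cint I D y
  end.

Fixpoint sat (I : Interp) (phi : formula) : Prop :=
  match phi with
  | FConc C a => cint I C (iI I a)
  | FRole r a b => rI I r (iI I a) (iI I b)
  | FTop C => forall x, cint I C x
  | FNot psi => ~ sat I psi
  | FAnd p q => sat I p /\ sat I q
  end.

Definition Mod (phi : formula) : Interp -> Prop := fun I => sat I phi.

Definition fequiv (phi psi : formula) : Prop := forall I, sat I phi <-> sat I psi.

Definition fin_representable (S : Interp -> Prop) : Prop :=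
  exists phi : formula, forall I, S I <-> sat I phi.

Fixpoint Sub0 (phi : formula) : list formula :=
  match phi with
  | FNot psi => Sub0 psi
  | FAnd p q => FAnd p q :: FNot (FAnd p q) :: Sub0 p ++ Sub0 q
  | a => [a; FNot a]
  end.
Definition Sub (phi : formula) : list formula := Sub0 (dn phi).

Inductive con (phi : formula) : concept -> Prop :=
| con_top : forall C, In (FTop C) (Sub phi) -> con phi C
| con_conc : forall C a, In (FConc C a) (Sub phi) -> con phi C
| con_andl : forall C D, con phi (CAnd C D) -> con phi C
| con_andr : forall C D, con phi (CAnd C D) -> con phi D
| con_ex : forall r C, con phi (CEx r C) -> con phi C
| con_neg : forall C, con phi C -> con phi (cneg C).

Fixpoint ind (phi : formula) : list nat :=
  match phi with
  | FConc _ a => [a]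
  | FRole _ a b => [a; b]
  | FTop _ => []
  | FNot p => ind p
  | FAnd p q => ind p ++ ind q
  end.

Definition concept_type (phi : formula) (c : concept -> Prop) : Prop :=
  (forall D, c D -> con phi D) /\
  (forall D, con phi D -> (c D <-> ~ c (cneg D))) /\
  (forall D E, con phi (CAnd D E) -> (c (CAnd D E) <-> c D /\ c E)).

Definition formula_type (phi : formula) (f : formula -> Prop) : Prop :=
  (forall psi, f psi -> In psi (Sub phi)) /\
  (forall psi, In psi (Sub phi) -> (f psi <-> ~ f (fneg psi))) /\
  (forall p q, In (FAnd p q) (Sub phi) -> (f (FAnd p q) <-> f p /\ f q)).

Definition model_candidate (phi : formula) (T : (concept -> Prop) -> Prop)
    (o : nat -> concept -> Prop) (f : formula -> Prop) : Prop :=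
  (forall c, T c -> concept_type phi c) /\
  (forall a, In a (ind phi) -> T (o a)) /\
  formula_type phi f /\
  f (dn phi) /\
  (forall C a, f (FConc C a) -> o a C) /\
  (forall r a b, f (FRole r a b) ->
     forall C, o a (CNot (CEx r C)) -> o b (cneg C)).

Definition quasimodel (phi : formula) (T : (concept -> Prop) -> Prop)
    (o : nat -> concept -> Prop) (f : formula -> Prop) : Prop :=
  model_candidate phi T o f /\
  (forall c r D, T c -> c (CEx r D) ->
     exists c', T c' /\ c' D /\ (forall E, c (CNot (CEx r E)) -> c' (cneg E))) /\
  (forall c C, T c -> c (cneg C) -> ~ f (FTop C)) /\
  (forall C, f (FNot (FTop C)) -> exists c, T c /\ ~ c C) /\
  (exists c, T c).

Definition ftypes (phi : formula) (f : formula -> Prop) : Prop :=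
  exists T o, quasimodel phi T o f.

Definition qm_T (phi : formula) (I : Interp) : (concept -> Prop) -> Prop :=
  fun c => exists x : dom I, forall C, c C <-> (con phi C /\ cint I C x).
Definition qm_o (phi : formula) (I : Interp) : nat -> concept -> Prop :=
  fun a C => con phi C /\ cint I C (iI I a).
Definition qm_f (phi : formula) (I : Interp) : formula -> Prop :=
  fun psi => In psi (Sub phi) /\ sat I psi.

Fixpoint sublists {A : Type} (l : list A) : list (list A) :=
  match l with
  | [] => [[]]
  | x :: l' => let r := sublists l' in map (cons x) r ++ r
  end.

Definition decide (P : Prop) : bool :=
  if excluded_middle_informative P then true else false.

(* f in qfilter(phi, M); a formula type is represented by a list s of
   subformulae (as the set {psi | In psi s}); every subset of Sub(phi)
   arises from some sublist of Sub(phi). *)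
Definition in_qfilter (phi : formula) (M : Interp) (f : formula -> Prop) : Prop :=
  ftypes phi f /\ ~ (forall psi, f psi <-> qm_f phi M psi).

Definition qfilter_list (phi : formula) (M : Interp) : list (list formula) :=
  filter (fun s => decide (in_qfilter phi M (fun psi => In psi s)))
         (sublists (Sub phi)).

Definition lit_conj (s : list formula) : formula := bigAnd (filter is_literal s).

(* C(phi, M); the empty disjunction is bottom *)
Definition Ccontr (phi : formula) (M : Interp) : formula :=
  if decide (sat M phi)
  then bigOr (map lit_conj (qfilter_list phi M))
  else phi.

Fixpoint atoms (phi : formula) : list formula :=
  match phi with
  | FNot p => atoms p
  | FAnd p q => atoms p ++ atoms q
  | a => [a]
  end.

Inductive Llit (phi : formula) : formula -> Prop :=
| Llit_atom : forall a, In a (atoms phi) -> Llit phi a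
| Llit_not : forall p, Llit phi p -> Llit phi (FNot p)
| Llit_and : forall p q, Llit phi p -> Llit phi q -> Llit phi (FAnd p q).

Definition equiv_phi (phi : formula) (M M' : Interp) : Prop :=
  forall psi, Llit phi psi -> (sat M psi <-> sat M' psi).

Definition P_success (C' : formula -> Interp -> formula) phi M : Prop :=
  ~ sat M (C' phi M).

Definition P_inclusion (C' : formula -> Interp -> formula) phi M : Prop :=
  forall I, Mod (C' phi M) I -> Mod phi I.

Definition P_atomic_retainment (C' : formula -> Interp -> formula) phi M : Prop :=
  forall MM : Interp -> Prop,
    ((forall I, Mod (C' phi M) I -> MM I) /\
     ~ (forall I, Mod (C' phi M) I <-> MM I)) ->
    (forall I, MM I -> Mod phi I /\ ~ equiv_phi phi I M) ->
    ~ fin_representable MM.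

Definition P_atomic_extensionality (C' : formula -> Interp -> formula) phi M : Prop :=
  forall M', equiv_phi phi M' M ->
    forall I, Mod (C' phi M) I <-> Mod (C' phi M') I.

(* Main.v *)
Require Import Defs.
From Stdlib Require Import Setoid List Classical FunctionalExtensionality PropExtensionality ClassicalEpsilon.
Import ListNotations.

Lemma decide_true (P : Prop) : decide P = true <-> P.
Proof. unfold decide; destruct (excluded_middle_informative P); split; intros; auto; try discriminate; contradiction. Qed.

Lemma decide_true1 (P : Prop) : decide P = true -> P.
Proof. apply decide_true. Qed.

Lemma sat_fneg I p : sat I (fneg p) <-> ~ sat I p.
Proof. destruct p; simpl; tauto. Qed.

Lemma sat_dn I p : sat I (dn p) <-> sat I p.
Proof. induction p; simpl; try tauto. rewrite sat_fneg. tauto. Qed.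

Lemma cint_cneg I C x : cint I (cneg C) x <-> ~ cint I C x.
Proof. destruct C; simpl; tauto. Qed.

Lemma sat_bigAnd I l : sat I (bigAnd l) <-> (forall x, In x l -> sat I x).
Proof.
  induction l; simpl.
  - unfold FTrue, FBot; simpl. split; [tauto|]. intros _ [H1 H2]. exact (H2 H1).
  - rewrite IHl. split; [intros [H1 H2] x [<-|Hx]; auto | intros H; split; auto].
Qed.

Lemma sat_bigOr I l : sat I (bigOr l) <-> exists x, In x l /\ sat I x.
Proof.
  induction l; simpl.
  - unfold FBot; simpl. split; [tauto|]. intros [x [[] _]].
  - unfold FOr; simpl. rewrite IHl. split.
    + intros H. destruct (classic (sat I a)) as [Ha|Ha]; [exists a; auto|].
      destruct (classic (exists x, In x l /\ sat I x)) as [[x [Hx Hs]]|Hn]; [exists x; auto|].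
      tauto.
    + intros [x [[<-|Hx] Hs]] [H1 H2]; [tauto|]. apply H2; eauto.
Qed.

Fixpoint nodn (p : formula) : Prop :=
  match p with
  | FNot (FNot _) => False
  | FNot q => nodn q
  | FAnd p q => nodn p /\ nodn q
  | _ => True
  end.

Lemma nodn_not x : nodn (FNot x) -> nodn x.
Proof. destruct x; simpl; tauto. Qed.

Lemma nodn_dn p : nodn (dn p).
Proof.
  induction p; simpl; auto.
  destruct (dn p) eqn:E; simpl in *; auto. apply nodn_not; auto.
Qed.

Lemma self_in p : nodn p -> In p (Sub0 p).
Proof. destruct p; simpl; auto. destruct p; simpl; auto. tauto. Qed.

Lemma Sub0_fneg x psi : In psi (Sub0 x) -> In (fneg psi) (Sub0 x).
Proof.
  induction x; simpl; intros H; try (destruct H as [<-|[<-|[]]]; simpl; auto; fail); auto.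
  destruct H as [<-|[<-|H]]; simpl; auto. right; right.
  apply in_app_or in H; apply in_or_app; destruct H; auto.
Qed.

Lemma Sub0_and x p q : nodn x -> In (FAnd p q) (Sub0 x) -> In p (Sub0 x) /\ In q (Sub0 x).
Proof.
  induction x; simpl; intros Hn H;
    try (destruct H as [E|[E|[]]]; discriminate).
  - apply IHx; auto. apply nodn_not; auto.
  - destruct Hn as [Hn1 Hn2]. destruct H as [E|[E|H]].
    + injection E; intros; subst. split; right; right; apply in_or_app;
        [left|right]; apply self_in; auto.
    + discriminate.
    + apply in_app_or in H. destruct H as [H|H].
      * destruct (IHx1 Hn1 H); split; right; right; apply in_or_app; auto.
      * destruct (IHx2 Hn2 H); split; right; right; apply in_or_app; auto.
Qed.

Lemma atoms_Sub0 x a : In a (atoms x) -> In a (Sub0 x).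
Proof.
  induction x; simpl; intros H; auto; try (destruct H as [<-|[]]; auto).
  right; right. apply in_app_or in H; apply in_or_app; destruct H; auto.
Qed.

Lemma atoms_fneg p : atoms (fneg p) = atoms p.
Proof. destruct p; reflexivity. Qed.

Lemma atoms_dn p : atoms (dn p) = atoms p.
Proof. induction p; simpl; try rewrite atoms_fneg; congruence. Qed.

Lemma Sub0_atoms x psi : In psi (Sub0 x) -> incl (atoms psi) (atoms x).
Proof.
  induction x; simpl; intros H;
    try (destruct H as [<-|[<-|[]]]; simpl; apply incl_refl); auto.
  destruct H as [<-|[<-|H]]; simpl; try apply incl_refl.
  apply in_app_or in H; destruct H; [apply incl_appl|apply incl_appr]; auto.
Qed.

Lemma atoms_atomic x a : In a (atoms x) -> is_atomic a.
Proof.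
  induction x; simpl; intros H; try (destruct H as [<-|[]]; simpl; auto); auto.
  apply in_app_or in H; destruct H; auto.
Qed.

Lemma Llit_of phi psi : incl (atoms psi) (atoms phi) -> Llit phi psi.
Proof.
  induction psi; intros H;
    try (apply Llit_atom; apply H; simpl; auto; fail).
  - apply Llit_not; auto.
  - apply Llit_and; [apply IHpsi1|apply IHpsi2]; intros a Ha; apply H; simpl;
      apply in_or_app; auto.
Qed.

Lemma Llit_atoms phi psi : Llit phi psi -> incl (atoms psi) (atoms phi).
Proof.
  induction 1; simpl.
  - intros b Hb. pose proof (atoms_atomic _ _ H).
    destruct a; simpl in *; try contradiction; destruct Hb as [<-|[]]; auto.
  - auto.
  - apply incl_app; auto.
Qed.

Lemma Sub_Llit phi psi : In psi (Sub phi) -> Llit phi psi.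
Proof. intros H. apply Llit_of. rewrite <- (atoms_dn phi). apply Sub0_atoms; auto. Qed.

Lemma sat_agree I J psi : (forall a, In a (atoms psi) -> (sat I a <-> sat J a)) ->
  (sat I psi <-> sat J psi).
Proof.
  induction psi; intros H; try (apply H; simpl; auto; fail).
  - simpl. rewrite IHpsi; auto. tauto.
  - simpl. rewrite IHpsi1, IHpsi2; [tauto| |]; intros a Ha; apply H; simpl;
      apply in_or_app; auto.
Qed.

Lemma equiv_sat phi I M : equiv_phi phi I M -> (sat I phi <-> sat M phi).
Proof. intros H. apply H, Llit_of, incl_refl. Qed.

Lemma ftype_agree phi f I : formula_type phi f ->
  (forall a, In a (atoms phi) -> (f a <-> sat I a)) ->
  forall psi, In psi (Sub phi) -> (f psi <-> sat I psi).
Proof.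
  intros [H1 [H2 H3]] Ha psi. induction psi; intros Hin;
    try (apply Ha; rewrite <- (atoms_dn phi);
         apply (Sub0_atoms _ _ Hin); simpl; auto; fail).
  - simpl. rewrite (H2 _ Hin). simpl. rewrite IHpsi; [tauto|].
    apply (Sub0_fneg _ _ Hin).
  - rewrite (H3 _ _ Hin). destruct (Sub0_and _ _ _ (nodn_dn phi) Hin).
    simpl. rewrite IHpsi1, IHpsi2; auto. tauto.
Qed.

Lemma sublists_filter {A} (p : A -> bool) l : In (filter p l) (sublists l).
Proof.
  induction l; simpl; auto. destruct (p a); apply in_or_app;
    [left; apply in_map; auto | right; auto].
Qed.

Lemma qm_quasimodel phi I : sat I phi ->
  quasimodel phi (qm_T phi I) (qm_o phi I) (qm_f phi I).
Proof.
  intros Hphi. unfold quasimodel, model_candidate.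
  split; [split; [|split; [|split; [|split; [|split]]]]|split; [|split; [|split]]].
  - intros c [x Hx]. split; [intros D HD; apply Hx in HD; tauto|]. split.
    + intros D HD. rewrite (Hx D), (Hx (cneg D)), cint_cneg.
      pose proof (con_neg _ _ HD). tauto.
    + intros D E HDE. rewrite !Hx. pose proof (con_andl _ _ _ HDE).
      pose proof (con_andr _ _ _ HDE). simpl. tauto.
  - intros a _. exists (iI I a). intros C; unfold qm_o; tauto.
  - split; [intros psi [H _]; auto|]. split.
    + intros psi Hin. unfold qm_f. rewrite sat_fneg.
      pose proof (Sub0_fneg _ _ Hin). tauto.
    + intros p q Hin. unfold qm_f. destruct (Sub0_and _ _ _ (nodn_dn phi) Hin).
      simpl. tauto.
  - unfold qm_f. split; [apply self_in, nodn_dn | apply sat_dn; auto].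
  - intros C a [Hin Hs]. split; [apply (con_conc _ _ a Hin)| exact Hs].
  - intros r a b [Hin Hs] C [Hc Hsc]. split.
    + apply con_neg, (con_ex _ r), (con_neg _ _ Hc).
    + apply cint_cneg. simpl in Hsc. intros HC; apply Hsc; exists (iI I b); split; auto.
  - intros c r D [x Hx] HD. apply Hx in HD as [HcD [y [Hr Hy]]].
    exists (fun C => con phi C /\ cint I C y). split; [exists y; intros; tauto|].
    split; [split; [apply (con_ex _ r); auto | auto]|].
    intros E HE. apply Hx in HE as [HcE HsE]. split.
    + apply con_neg, (con_ex _ r), (con_neg _ _ HcE).
    + apply cint_cneg. intro. apply HsE. simpl. exists y; auto.
  - intros c C [x Hx] Hc [Hin Hs]. apply Hx in Hc as [_ Hc].
    apply cint_cneg in Hc. apply Hc, Hs.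
  - intros C [Hin Hs]. simpl in Hs. apply not_all_ex_not in Hs as [x Hx].
    exists (fun D => con phi D /\ cint I D x). split; [exists x; intros; tauto|].
    intros [_ H]; auto.
  - destruct (dom_inh I) as [x]. exists (fun D => con phi D /\ cint I D x).
    exists x; intros; tauto.
Qed.

Lemma atomic_facts a : is_atomic a -> is_literal a = true /\ is_literal (FNot a) = true /\ fneg a = FNot a.
Proof. destruct a; simpl; try contradiction; auto. Qed.

Lemma Ccontr_char phi M I :
  sat I (Ccontr phi M) <-> sat I phi /\ (sat M phi -> ~ equiv_phi phi I M).
Proof.
  unfold Ccontr. destruct (decide (sat M phi)) eqn:E.
  - apply decide_true1 in E. rewrite sat_bigOr. split.
    + intros [x [Hx Hs]]. apply in_map_iff in Hx as [s [<- Hs']].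
      unfold qfilter_list in Hs'. apply filter_In in Hs' as [_ Hq]. cbv beta in Hq.
      apply decide_true1 in Hq. unfold in_qfilter, ftypes in Hq. destruct Hq as [[T [o Hqm]] Hne].
      destruct Hqm as [[_ [_ [Hft [Hdn _]]]] _].
      unfold lit_conj in Hs. rewrite sat_bigAnd in Hs.
      assert (Hag : forall psi, In psi (Sub phi) -> (In psi s <-> sat I psi)).
      { apply ftype_agree; auto. intros a Ha.
        assert (HaS : In a (Sub phi)) by (apply atoms_Sub0; rewrite atoms_dn; auto).
        destruct (atomic_facts a (atoms_atomic _ _ Ha)) as [L1 [L2 L3]].
        split.
        - intro H; apply Hs; apply filter_In; split; auto.
        - intro Hsat. destruct (classic (In a s)) as [|Hn]; auto. exfalso.
          destruct Hft as [_ [Hft _]]. rewrite (Hft _ HaS), L3 in Hn.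
          apply NNPP in Hn. specialize (Hs (FNot a)).
          simpl in Hs. apply Hs; auto. apply filter_In; auto. }
      destruct Hft as [Hft1 _].
      split; [apply sat_dn, Hag; auto|].
      intros _ Heq. apply Hne. intros psi. unfold qm_f. split.
      * intros Hp. pose proof (Hft1 _ Hp). split; auto.
        apply (Heq _ (Sub_Llit _ _ H)). apply Hag; auto.
      * intros [Hin Hsat]. apply Hag; auto. apply (Heq _ (Sub_Llit _ _ Hin)); auto.
    + intros [HI Hne]. specialize (Hne E).
      set (s := filter (fun psi => decide (sat I psi)) (Sub phi)).
      assert (Hs : (fun psi => In psi s) = qm_f phi I).
      { apply functional_extensionality; intros psi; apply propositional_extensionality.
        unfold s, qm_f. rewrite filter_In, decide_true. reflexivity. }
      exists (lit_conj s). split.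
      * apply in_map. unfold qfilter_list. apply filter_In. split; [apply sublists_filter|].
        apply decide_true. unfold in_qfilter. rewrite Hs. split.
        -- exists (qm_T phi I), (qm_o phi I). apply qm_quasimodel; auto.
        -- intros Hall. apply Hne. intros psi Hl. apply sat_agree.
           intros a Ha. apply Llit_atoms in Hl. apply Hl in Ha.
           assert (HaS : In a (Sub phi)) by (apply atoms_Sub0; rewrite atoms_dn; auto).
           specialize (Hall a). unfold qm_f in Hall. unfold s in Hall. rewrite filter_In, decide_true in Hall. tauto.
      * unfold lit_conj. apply sat_bigAnd. intros x Hx.
        apply filter_In in Hx as [Hx _]. unfold s in Hx. apply filter_In in Hx as [_ Hx].
        apply decide_true1 in Hx; auto.
  - assert (~ sat M phi) by (intros H; apply decide_true in H; congruence). tauto.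
Qed.

Lemma equiv_refl phi M : equiv_phi phi M M.
Proof. intros psi _; tauto. Qed.

Theorem mainTheorem1 (C' : formula -> Interp -> formula) :
  (forall (phi : formula) (M : Interp), fequiv (C' phi M) (Ccontr phi M)) <->
  (forall (phi : formula) (M : Interp),
     P_success C' phi M /\ P_inclusion C' phi M /\
     P_atomic_retainment C' phi M /\ P_atomic_extensionality C' phi M).
Proof.
  split.
  - intros Heq phi M. unfold P_success, P_inclusion, P_atomic_retainment,
      P_atomic_extensionality, Mod.
    split; [|split; [|split]].
    + rewrite (Heq phi M M), Ccontr_char. pose proof (equiv_refl phi M). tauto.
    + intros I. rewrite (Heq phi M I), Ccontr_char. tauto.
    + intros MM [Hsub Hne] Hin _. apply Hne. intros I. split; auto.
      intros HI. apply Heq, Ccontr_char. destruct (Hin I HI). tauto.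
    + intros M' HM' I. rewrite (Heq phi M I), (Heq phi M' I), !Ccontr_char.
      rewrite (equiv_sat _ _ _ HM').
      assert (equiv_phi phi I M <-> equiv_phi phi I M').
      { split; intros H psi Hp; specialize (H psi Hp); specialize (HM' psi Hp); tauto. }
      tauto.
  - intros HP phi M I.
    assert (Hfw : forall J, sat J (C' phi M) -> sat J phi /\ (sat M phi -> ~ equiv_phi phi J M)).
    { intros J HJ. destruct (HP phi M) as [_ [Hinc _]]. split; [apply Hinc; auto|].
      intros _ HJM. destruct (HP phi M) as [_ [_ [_ Hext]]].
      apply (Hext J HJM J) in HJ. destruct (HP phi J) as [Hsucc _]. apply Hsucc, HJ. }
    rewrite Ccontr_char. split; [apply Hfw|].
    intros HI. apply NNPP. intros HnI.
    destruct (HP phi M) as [_ [_ [Hret _]]].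
    apply (Hret (fun J => sat J (Ccontr phi M))).
    + split.
      * intros J HJ. apply Ccontr_char, Hfw; auto.
      * intros Hall. apply HnI. apply Hall. apply Ccontr_char; auto.
    + intros J HJ. apply Ccontr_char in HJ as [HJ1 HJ2]. split; auto.
      intros HJM. destruct (classic (sat M phi)) as [Hm|Hm]; [tauto|].
      apply Hm, (equiv_sat _ _ _ HJM); auto.
    + exists (Ccontr phi M). tauto.
Qed.
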